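(* Let $\lambda_1-\lambda_2=2$ with $\lambda_2\ge1$, and $n=\lambda_1+\lambda_2$. If $(\mu_1,\mu_2)$ is a partition of $n$ with two positive parts such that there exist commuting nilpotent $n\times n$ matrices $B,A$ with $\mathrm{sh}(B)=(\lambda_1,\lambda_2)$ and $\mathrm{sh}(A)=(\mu_1,\mu_2)$, then $\mu_1=\lambda_1$ or $\mu_1=\lambda_1-1$.
   Context: $\mathbb{F}$ is an algebraically closed field of characteristic $0$ and matrices are over $\mathbb{F}$. For a nilpotent matrix $A$, $\mathrm{sh}(A)$ is the partition of $n$ given by the sizes of the Jordan blocks of its Jordan canonical form. *)

(* Defs.v *)
From HB Require Import structures.
From mathcomp Require Import all_boot all_order all_algebra.
Set Implicit Arguments. Unset Strict Implicit. Unset Printing Implicit Defensive.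
Import Order.TTheory GRing.Theory Num.Theory.
Local Open Scope ring_scope.

Definition is_partition_of (n : nat) (s : seq nat) : bool :=
  [&& sumn s == n, sorted geq s & all (fun x => 0 < x)%N s].

Definition block_ends (s : seq nat) : seq nat :=
  [seq sumn (take k s) | k <- iota 1 (size s)].

(* The nilpotent Jordan matrix with blocks of sizes s (in this order):
   entry (i,j) is 1 iff j = i+1 and i, i+1 lie in the same block. *)
Definition jordan_nil (F : nzRingType) (n : nat) (s : seq nat) : 'M[F]_n :=
  \matrix_(i < n, j < n)
    ((nat_of_ord j == (nat_of_ord i).+1) && ((nat_of_ord i).+1 \notin block_ends s))%:R.

Definition nilpotent_mx (F : nzRingType) (n : nat) (A : 'M[F]_n) : Prop :=
  exists k : nat, A ^+ k = 0.

Definition sh_is (F : fieldType) (n : nat) (A : 'M[F]_n) (s : seq nat) : Prop :=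
  is_partition_of n s /\
  exists P : 'M[F]_n, P \in unitmx /\ A = invmx P *m jordan_nil F n s *m P.

(* Main.v *)
Require Import Defs.
From HB Require Import structures.
From mathcomp Require Import all_boot all_order all_algebra.
From mathcomp Require Import zify.
Import Order.TTheory GRing.Theory Num.Theory.
Set Implicit Arguments. Unset Strict Implicit.
Local Open Scope ring_scope.

Section Aux.
Variable F : fieldType.

Definition ent (n : nat) (X : 'M[F]_n) (r c : nat) : F :=
  match (insub r : option 'I_n), (insub c : option 'I_n) with
  | Some i, Some j => X i j | _, _ => 0 end.

Lemma entE n (X : 'M[F]_n) (i j : 'I_n) : ent X i j = X i j.
Proof. by rewrite /ent !valK. Qed.

Lemma ent_out n (X : 'M[F]_n) r c : ((n <= r) || (n <= c))%N -> ent X r c = 0.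
Proof.
rewrite /ent; case/orP=> h.
  by rewrite insubN // -leqNgt.
by case: (insub r) => // ?; rewrite insubN // -leqNgt.
Qed.

Lemma ent_mul n (X Y : 'M[F]_n) r c : (r < n)%N -> (c < n)%N ->
  ent (X *m Y) r c = \sum_(m < n) ent X r m * ent Y m c.
Proof.
move=> hr hc.
rewrite -[r]/(nat_of_ord (Ordinal hr)) -[c]/(nat_of_ord (Ordinal hc)) entE mxE.
by apply: eq_bigr => m _; rewrite !entE.
Qed.

Lemma ent_one n r c : (r < n)%N -> (c < n)%N -> ent (1 : 'M[F]_n) r c = (r == c)%:R.
Proof.
move=> hr hc.
rewrite -[r]/(nat_of_ord (Ordinal hr)) -[c]/(nat_of_ord (Ordinal hc)) entE -idmxE mxE.
by [].
Qed.

Lemma ent0 n r c : ent (0 : 'M[F]_n) r c = 0.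
Proof.
case: (ltnP r n) => hr; last by rewrite ent_out ?hr.
case: (ltnP c n) => hc; last by rewrite ent_out ?hc ?orbT.
by rewrite -[r]/(nat_of_ord (Ordinal hr)) -[c]/(nat_of_ord (Ordinal hc)) entE mxE.
Qed.

Lemma entJ n s r c : (r < n)%N -> (c < n)%N ->
  ent (jordan_nil F n s) r c = ((c == r.+1) && (r.+1 \notin block_ends s))%:R.
Proof.
move=> hr hc.
by rewrite -[r]/(nat_of_ord (Ordinal hr)) -[c]/(nat_of_ord (Ordinal hc)) entE mxE.
Qed.

Lemma sum_single n (G : 'I_n -> F) (i0 : 'I_n) :
  (forall m : 'I_n, m != i0 -> G m = 0) -> \sum_(m < n) G m = G i0.
Proof.
by move=> h; rewrite (bigD1 i0) //= big1 ?addr0 // => m /h.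
Qed.

Lemma mulJ_ent n s (X : 'M[F]_n) r c : (c < n)%N ->
  ent (X *m jordan_nil F n s) r c =
  if (0 < c)%N && (c \notin block_ends s) then ent X r c.-1 else 0.
Proof.
move=> hc; case: (ltnP r n) => hr; last first.
  by rewrite !ent_out ?hr //; case: ifP.
rewrite ent_mul //; case: c hc => [|c] hc /=.
  by rewrite big1 // => m _; rewrite entJ // mulr0.
have hc' : (c < n)%N by apply: ltnW.
rewrite (sum_single (i0 := Ordinal hc')) /=; last first.
  move=> m hm; rewrite entJ //; case: eqP; last by rewrite mulr0.
  by move=> [] e; move: hm; rewrite -(inj_eq val_inj) /= e eqxx.
by rewrite entJ // eqxx /=; case: (_ \notin _); rewrite ?mulr1 ?mulr0.
Qed.

Lemma Jmul_ent n s (X : 'M[F]_n) r c : (c < n)%N ->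
  ent (jordan_nil F n s *m X) r c =
  if (r.+1 < n)%N && (r.+1 \notin block_ends s) then ent X r.+1 c else 0.
Proof.
move=> hc; case: (ltnP r n) => hr; last first.
  by rewrite ent_out ?hr //; case: ifP => // /andP[h _]; lia.
rewrite ent_mul //; case: (ltnP r.+1 n) => hr1 /=; last first.
  by rewrite big1 // => m _; rewrite entJ //; case: eqP => [e|]; [have := ltn_ord m; lia | rewrite mul0r].
rewrite (sum_single (i0 := Ordinal hr1)) /=; last first.
  move=> m hm; rewrite entJ //; case: eqP; last by rewrite mul0r.
  by move=> e; move: hm; rewrite -(inj_eq val_inj) /= e eqxx.
by rewrite entJ // eqxx /=; case: (_ \notin _); rewrite ?mul1r ?mul0r.
Qed.


Lemma core n p q (N : 'M[F]_n) : n = (p + q)%N -> p = q.+2 -> (0 < q)%N ->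
  N *m jordan_nil F n [:: p; q] = jordan_nil F n [:: p; q] *m N ->
  (exists k, N ^+ k = 0) -> N ^+ p = 0.
Proof.
move=> hn hp hq hcomm [k0 hk0].
have ends : block_ends [:: p; q] = [:: p; n] by rewrite /block_ends /= !addn0 hn.
have E : forall r c, (r < n)%N -> (c < n)%N ->
   (if (0 < c)%N && (c \notin [:: p; n]) then ent N r c.-1 else 0) =
   (if (r.+1 < n)%N && (r.+1 \notin [:: p; n]) then ent N r.+1 c else 0).
  move=> r c hr hc; rewrite -ends -mulJ_ent // -Jmul_ent //.
  by rewrite hcomm.
have C1 : forall r c, (r.+1 < n)%N -> (c.+1 < n)%N -> r.+1 != p -> c.+1 != p ->
    ent N r.+1 c.+1 = ent N r c.
  move=> r c hr hc hrp hcp; have := E r c.+1 (ltnW hr) hc.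
  rewrite !inE /= hr (negbTE hrp) (negbTE hcp).
  have -> : (c.+1 == n) = false by apply/eqP; lia.
  have -> : (r.+1 == n) = false by apply/eqP; lia.
  by move=> /= ->.
have C2 : forall r c, (c < n)%N -> (c = 0 \/ c = p)%N -> (r.+1 < n)%N -> r.+1 != p ->
    ent N r.+1 c = 0.
  move=> r c hc hc0 hr hrp; have := E r c (ltnW hr) hc.
  rewrite !inE /= hr (negbTE hrp).
  have -> : (r.+1 == n) = false by apply/eqP; lia.
  by case: hc0 => e; subst c; rewrite ?eqxx /= ?andbF => <-.
have C3 : forall c, (0 < c < n)%N -> c != p -> ent N n.-1 c.-1 = 0.
  move=> c /andP[hc0 hc] hcp; have := E n.-1 c ltac:(lia) hc.
  rewrite !inE hc0 (negbTE hcp) /=.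
  have -> : (c == n) = false by apply/eqP; lia.
  by rewrite prednK ?ltnn //; lia.
have shift : forall k r c r' c', r' = (r + k)%N -> c' = (c + k)%N ->
    (r' < n)%N -> (c' < n)%N -> (p <= r \/ r' < p)%N -> (p <= c \/ c' < p)%N ->
    ent N r' c' = ent N r c.
  elim=> [|k IH] r c r' c' -> ->; first by rewrite !addn0.
  move=> h1 h2 h3 h4; rewrite !addnS.
  have a1 : (r + k).+1 != p by apply/eqP; clear -h1 h3; lia.
  have a2 : (c + k).+1 != p by apply/eqP; clear -h2 h4; lia.
  rewrite C1 //; [|clear -h1; lia|clear -h2; lia].
  rewrite (IH r c (r + k)%N (c + k)%N) //; clear -h1 h2 h3 h4; lia.
have gp0 : ent N p 0 = 0.
  have h := C3 q ltac:(apply/andP; lia) ltac:(apply/eqP; lia).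
  rewrite -h; symmetry; apply: (shift q.-1); lia.
have gp1 : ent N p 1 = 0.
  have h := C3 q.+1 ltac:(apply/andP; lia) ltac:(apply/eqP; lia).
  rewrite -h; symmetry; apply: (shift q.-1); rewrite /=; lia.
have col0 : forall r, (r < n)%N -> r != 0%N -> ent N r 0 = 0.
  move=> [|r] hr hr0 //; case: (eqVneq r.+1 p) => [e|ne]; first by rewrite e gp0.
  by apply: C2 => //; [lia | left].
have colp : forall r, (r < n)%N -> r != 0%N -> r != p -> ent N r p = 0.
  by move=> [|r] hr hr0 hrp //; apply: C2 => //; [lia | right].
have hn0 : (0 < n)%N by lia.
have pow0 : forall k r, (r < n)%N -> ent (N ^+ k) r 0 = if r == 0%N then ent N 0 0 ^+ k else 0.
  elim=> [|k IH] r hr.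
    by rewrite expr0 ent_one //; case: (r == 0%N).
  rewrite exprSr -mulmxE ent_mul // (sum_single (i0 := Ordinal hn0)) /=; last first.
    move=> m hm; rewrite [ent N m 0]col0 ?mulr0 //.
    all: try by apply: contra hm => /eqP e; apply/eqP/val_inj.
  by rewrite IH //; case: (r == 0%N); rewrite ?exprSr ?mul0r.
have hpn : (p < n)%N by lia.
have powp : forall k, ent (N ^+ k) p p = ent N p p ^+ k.
  elim=> [|k IH]; first by rewrite expr0 ent_one ?eqxx.
  rewrite exprSr -mulmxE ent_mul // (sum_single (i0 := Ordinal hpn)) /=; last first.
    move=> m hm; have hm' : (nat_of_ord m != p).
      by apply: contra hm => /eqP e; apply/eqP/val_inj.
    case: (eqVneq (nat_of_ord m) 0%N) => e.
      rewrite e pow0 //; have -> : (p == 0%N) = false by apply/eqP; lia.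
      by rewrite mul0r.
    by rewrite colp ?mulr0.
  by rewrite IH exprSr.
have a0 : ent N 0 0 = 0.
  have := pow0 k0 0%N hn0; rewrite hk0 ent0 eqxx => /esym/eqP.
  by rewrite expf_eq0 => /andP[_ /eqP].
have d0 : ent N p p = 0.
  have := powp k0; rewrite hk0 ent0 => /esym/eqP.
  by rewrite expf_eq0 => /andP[_ /eqP].
pose lev := fun i => if (i < p)%N then i.+1 else (i - p).+2.
have Z : forall r c, (r < n)%N -> (c < n)%N -> (lev c <= lev r)%N -> ent N r c = 0.
  move=> r c hr hc; rewrite /lev; case: (ltnP r p) => hrp; case: (ltnP c p) => hcp hl.
  - have -> : ent N r c = ent N (r - c)%N 0 by apply: (shift c); lia.
    case e: (r - c)%N => [|x]; first by rewrite a0.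
    by apply: C2; [lia| left| lia| apply/eqP; lia].
  - have -> : ent N r c = ent N (r - (c - p))%N p by apply: (shift (c - p)%N); lia.
    have [x ex] : exists x, (r - (c - p))%N = x.+1 by exists (r - (c - p))%N.-1; lia.
    by rewrite ex; apply: C2; [lia| right| lia| apply/eqP; lia].
  - case: (leqP c (r - p)) => hc2.
      have -> : ent N r c = ent N (r - c)%N 0 by apply: (shift c); lia.
      case: (eqVneq (r - c)%N p) => [->|ne]; first exact gp0.
      have [x ex] : exists x, (r - c)%N = x.+1 by exists (r - c)%N.-1; lia.
      by rewrite ex; apply: C2; [lia| left| lia| apply/eqP; lia].
    have -> : ent N r c = ent N p 1 by apply: (shift c.-1); lia.
    exact gp1.
  - have -> : ent N r c = ent N (r - (c - p))%N p by apply: (shift (c - p)%N); lia.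
    case: (eqVneq r c) => [<-|ne].
      by have -> : (r - (r - p))%N = p by lia.
    have [x ex] : exists x, (r - (c - p))%N = x.+1 by exists (r - (c - p))%N.-1; lia.
    by rewrite ex; apply: C2; [lia| right| lia| apply/eqP; lia].
have L : forall k r c, (r < n)%N -> (c < n)%N -> (lev c < lev r + k)%N -> ent (N ^+ k) r c = 0.
  elim=> [|k IH] r c hr hc hl.
    by rewrite expr0 ent_one //; case: eqP => // e; subst; rewrite addn0 ltnn in hl.
  rewrite exprS -mulmxE ent_mul // big1 // => m _.
  case: (leqP (lev m) (lev r)) => h; first by rewrite Z ?mul0r.
  by rewrite IH ?mulr0 //; lia.
have levb : forall i, (i < n)%N -> (0 < lev i <= p)%N.
  by move=> i hi; rewrite /lev /=; case: (ltnP i p) => h; lia.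
apply/matrixP => i j; rewrite -entE -[RHS]entE ent0 L //.
by have := levb i (ltn_ord i); have := levb j (ltn_ord j); lia.
Qed.

Lemma Jpow n mu1 mu2 k : n = (mu1 + mu2)%N -> (k < mu1)%N ->
  ent ((jordan_nil F n [:: mu1; mu2]) ^+ k) 0 k = 1.
Proof.
move=> hn; elim: k => [|k IH] hk.
  by rewrite expr0 ent_one ?eqxx //; lia.
have hkn : (k < n)%N by lia.
rewrite exprSr -mulmxE ent_mul; [|lia|lia].
rewrite (sum_single (i0 := Ordinal hkn)) /=; last first.
  move=> m hm; rewrite entJ; [|exact: ltn_ord|lia].
  case: eqP => e; last by rewrite mulr0.
  by exfalso; move/negP: hm; apply; apply/eqP/val_inj => /=; case: e.
rewrite IH; last by lia.
rewrite mul1r entJ ?eqxx /=; [|lia|lia].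
have -> : (k.+1 \in block_ends [:: mu1; mu2]) = false.
  by rewrite /block_ends /= !inE; apply/negbTE/norP; split; apply/eqP; lia.
by [].
Qed.

Lemma conj_mul n (P X Y : 'M[F]_n) : P \in unitmx ->
  (P *m X *m invmx P) *m (P *m Y *m invmx P) = P *m (X *m Y) *m invmx P.
Proof.
move=> hP; rewrite -!mulmxA (mulmxA (invmx P)) mulVmx // mul1mx.
by rewrite !mulmxA.
Qed.

Lemma conj_pow n (P X : 'M[F]_n) k : P \in unitmx ->
  (P *m X *m invmx P) ^+ k = P *m X ^+ k *m invmx P.
Proof.
move=> hP; elim: k => [|k IH].
  by rewrite !expr0 -idmxE mulmx1 mulmxV.
by rewrite !exprS -!mulmxE IH conj_mul.
Qed.

End Aux.

Theorem lemma3p4 (F : closedFieldType) (hF : [pchar F] =i pred0)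
  (l1 l2 mu1 mu2 : nat) (hl : l1 = (l2 + 2)%N) (hl2 : (1 <= l2)%N)
  (hmu : is_partition_of (l1 + l2) [:: mu1; mu2])
  (B A : 'M[F]_(l1 + l2))
  (hBn : nilpotent_mx B) (hAn : nilpotent_mx A)
  (hcomm : B *m A = A *m B)
  (hshB : sh_is B [:: l1; l2]) (hshA : sh_is A [:: mu1; mu2]) :
  mu1 = l1 \/ mu1 = (l1 - 1)%N.
Proof.
subst l1.
case: hshB => _ [P [hP hB]].
case: hshA => _ [Q [hQ hA]].
move: hmu; rewrite /is_partition_of /= => /and3P[/eqP hs hsort _].
rewrite addn0 in hs; move: hsort; rewrite andbT /= => hsort.
have hJ : jordan_nil F (l2 + 2 + l2)%N [:: (l2 + 2)%N; l2] = P *m B *m invmx P.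
  rewrite hB !mulmxA mulmxV // mul1mx -mulmxA mulmxV // mulmx1 //.
have hN : (P *m A *m invmx P) ^+ (l2 + 2) = 0.
  apply: (core (p := (l2 + 2)%N) (q := l2)); [by []|lia|lia| |].
    by rewrite hJ !conj_mul // hcomm.
  case: hAn => k hk; exists k; by rewrite conj_pow // hk mulmx0 mul0mx.
have hAN : A = invmx P *m (P *m A *m invmx P) *m P.
  by rewrite !mulmxA mulVmx // mul1mx -mulmxA mulVmx // mulmx1.
have hAp : A ^+ (l2 + 2) = 0.
  have hiP : invmx P \in unitmx by rewrite unitmx_inv.
  have := conj_pow (P := invmx P) (P *m A *m invmx P) (l2 + 2) hiP; rewrite invmxK => h.
  by rewrite {1}hAN h // hN mulmx0 mul0mx.
have hJA : jordan_nil F (l2 + 2 + l2)%N [:: mu1; mu2] = Q *m A *m invmx Q.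
  rewrite hA !mulmxA mulmxV // mul1mx -mulmxA mulmxV // mulmx1 //.
have hJp : (jordan_nil F (l2 + 2 + l2)%N [:: mu1; mu2]) ^+ (l2 + 2) = 0.
  by rewrite hJA conj_pow // hAp mulmx0 mul0mx.
case: (leqP mu1 (l2 + 2)) => h; first by lia.
have := Jpow F (k := (l2 + 2)%N) (esym hs) h.
by rewrite hJp ent0 => /eqP; rewrite eq_sym oner_eq0.
Qed.
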